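(* Let $L\in\mathbb N$, $L\ge2$, ${\bf A}\in\mathbb R^{M\times N}$, ${\bf b}\in\mathbb R^M$ with ${\bf b}\neq0$, and assume $S_+=\{{\bf z}\ge0:{\bf A}{\bf z}={\bf b}\}$ is non-empty. Let $(r,{\bf u})$ follow the weight-normalized gradient flow with learning rates $\eta_r(t)=r(t)^2$, $\eta_{\bf u}=1$, with $r(0)>0$, ${\bf u}(0)>0$, $\|{\bf u}(0)\|_2=1$, and put ${\bf x}=\frac{r}{\|{\bf u}\|_2}{\bf u}$. Then $\lim_{t\to\infty}\mathcal L({\bf x}(t))=0$.
   Context: $\odot$ denotes entrywise power; vector inequalities are entrywise. Loss: $\mathcal L({\bf x})=\frac{1}{2L}\|{\bf A}{\bf x}^{\odot L}-{\bf b}\|_2^2$. Weight-normalized loss $\tilde{\mathcal L}(r,{\bf u})=\mathcal L\big(\frac{r}{\|{\bf u}\|_2}{\bf u}\big)$. Weight-normalized gradient flow: $\partial_t r=-\eta_r\nabla_r\tilde{\mathcal L}(r,{\bf u})$, $\partial_t{\bf u}=-\eta_{\bf u}\nabla_{\bf u}\tilde{\mathcal L}(r,{\bf u})$, $r(0)=r_0$, ${\bf u}(0)={\bf u}_0$. *)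

(* Defs.v *)
From HB Require Import structures.
From mathcomp Require Import all_boot all_order all_algebra.
From mathcomp Require Import all_classical all_reals all_analysis.
Set Implicit Arguments. Unset Strict Implicit. Unset Printing Implicit Defensive.
Import Order.TTheory GRing.Theory Num.Theory.
Import numFieldNormedType.Exports.
Local Open Scope ring_scope.

Definition norm2 {R : realType} {n : nat} (v : 'cV[R]_n) : R :=
  Num.sqrt (\sum_(i < n) (v i 0) ^+ 2).

Definition epow {R : realType} {n : nat} (x : 'cV[R]_n) (L : nat) : 'cV[R]_n :=
  map_mx (fun a => a ^+ L) x.

Definition loss {R : realType} {M N : nat} (L : nat) (A : 'M[R]_(M, N))
  (b : 'cV[R]_M) (x : 'cV[R]_N) : R :=
  (2 * L%:R)^-1 * (norm2 (A *m epow x L - b)) ^+ 2.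

Definition wn_x {R : realType} {N : nat} (r : R) (u : 'cV[R]_N) : 'cV[R]_N :=
  (r / norm2 u) *: u.

Definition wn_loss {R : realType} {M N : nat} (L : nat) (A : 'M[R]_(M, N))
  (b : 'cV[R]_M) (r : R) (u : 'cV[R]_N) : R :=
  loss L A b (wn_x r u).

Definition is_grad {R : realType} {N : nat} (F : 'cV[R]_N -> R)
  (v g : 'cV[R]_N) : Prop :=
  forall i : 'I_N, is_derive v (delta_mx i 0 : 'cV[R]_N) F (g i 0).

(* Main.v *)
Require Import Defs.
From HB Require Import structures.
From mathcomp Require Import all_boot all_order all_algebra.
From mathcomp Require Import all_classical all_reals all_analysis.
From mathcomp Require Import ring lra zify.
Import Order.TTheory GRing.Theory Num.Theory.
Import numFieldNormedType.Exports.
Local Open Scope classical_set_scope.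
Local Open Scope ring_scope.

Module W.
Import Order.TTheory GRing.Theory Num.Theory.
Import numFieldNormedType.Exports.
Local Open Scope classical_set_scope.
Local Open Scope ring_scope.
Set Implicit Arguments. Unset Strict Implicit. Unset Printing Implicit Defensive.

Section S.
Variable R : realType.

Lemma isd_eq (f : R -> R) (x d d' : R) : is_derive x 1 f d -> d = d' -> is_derive x 1 f d'.
Proof. by move=> ? <-. Qed.

Lemma isd_sum n (f : 'I_n -> R -> R) (x : R) (df : 'I_n -> R) :
  (forall i, is_derive x 1 (f i) (df i)) ->
  is_derive x 1 (fun y => \sum_(i < n) f i y) (\sum_(i < n) df i).
Proof.
move=> H; have -> : (fun y => \sum_(i < n) f i y) = \sum_(i < n) f i.
  by apply/funext => y; rewrite fct_sumE.
exact: is_derive_sum.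
Qed.

Lemma isd_mul (f g : R -> R) (x df dg : R) :
  is_derive x 1 f df -> is_derive x 1 g dg ->
  is_derive x 1 (fun y => f y * g y) (f x * dg + g x * df).
Proof. move=> Hf Hg; exact: (is_deriveM Hf Hg). Qed.

Lemma isd_exp (f : R -> R) (n : nat) (x df : R) :
  is_derive x 1 f df ->
  is_derive x 1 (fun y => f y ^+ n) (n%:R * f x ^+ n.-1 * df).
Proof.
move=> Hf; have := is_deriveX n Hf.
have -> : (f ^+ n) = (fun y => f y ^+ n) by apply/funext => y; rewrite exprfctE.
move=> H; apply: (isd_eq H). by rewrite /GRing.scale /= mulrC.
Qed.

Lemma isd_cst (c x : R) : is_derive x 1 (fun _ : R => c) 0.
Proof. exact: is_derive_cst. Qed.

Lemma isd_id (x : R) : is_derive x 1 (fun y : R => y) 1.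
Proof. exact: is_derive_id. Qed.

Lemma isd_add (f g : R -> R) (x df dg : R) :
  is_derive x 1 f df -> is_derive x 1 g dg ->
  is_derive x 1 (fun y => f y + g y) (df + dg).
Proof. move=> Hf Hg; exact: (is_deriveD Hf Hg). Qed.

Lemma isd_sub (f g : R -> R) (x df dg : R) :
  is_derive x 1 f df -> is_derive x 1 g dg ->
  is_derive x 1 (fun y => f y - g y) (df - dg).
Proof. move=> Hf Hg; exact: (is_deriveB Hf Hg). Qed.

Lemma isd_scal (c : R) (f : R -> R) (x df : R) :
  is_derive x 1 f df -> is_derive x 1 (fun y => c * f y) (c * df).
Proof. move=> Hf; exact: (is_deriveZ c Hf). Qed.


Lemma isd_comp (f g : R -> R) (x a b : R) :
  is_derive (g x) 1 f a -> is_derive x 1 g b ->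
  is_derive x 1 (fun y => f (g y)) (a * b).
Proof. move=> Hf Hg; exact: (is_derive1_comp Hf Hg). Qed.

Lemma isd_inv (f : R -> R) (x df : R) : f x != 0 -> is_derive x 1 f df ->
  is_derive x 1 (fun y => (f y)^-1) (- (f x) ^- 2 * df).
Proof. move=> H Hf; exact: (is_deriveV H Hf). Qed.

Lemma isd_dir (V : normedModType R) (F : V -> R) (x v : V) (df : R) :
  is_derive (0:R) 1 (fun h : R => F (h *: v + x)) df -> is_derive x v F df.
Proof.
move=> [dv dval].
have E : (fun h : R => h^-1 *: (((fun h : R => F (h *: v + x)) \o shift 0) (h *: 1) - F (0 *: v + x)))
   = (fun h : R => h^-1 *: ((F \o shift x) (h *: v) - F x)).
  by apply/funext => h /=; rewrite scale0r add0r addr0 /GRing.scale /= mulr1.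
split.
  rewrite /derivable -E; exact: dv.
by rewrite /derive -E; exact: dval.
Qed.

Lemma is_derive_coord (N : nat) (u : R -> 'cV[R]_N) (t : R) (du : 'cV[R]_N) (i : 'I_N) :
  is_derive t 1 u du -> is_derive t 1 (fun s => u s i 0) (du i 0).
Proof.
move=> [dv dval].
have E : (fun h : R => h^-1 *: (((fun s => u s i 0) \o shift t) (h *: 1) - u t i 0)) =
   (fun M : 'M[R]_(N,1) => M i 0) \o (fun h : R => h^-1 *: ((u \o shift t) (h *: 1) - u t)).
  by apply/funext => h /=; rewrite !mxE.
have C : (fun h : R => h^-1 *: (((fun s => u s i 0) \o shift t) (h *: 1) - u t i 0)) @ 0^' --> du i 0.
  rewrite E -dval; apply: continuous_cvg; first exact: coord_continuous.
  exact: dv.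
split; first by apply/cvg_ex; exists (du i 0).
exact: cvg_lim.
Qed.

End S.

End W.
Import W.

Module C.
Import Order.TTheory GRing.Theory Num.Theory.
Import numFieldNormedType.Exports.
Local Open Scope classical_set_scope.
Local Open Scope ring_scope.
Set Implicit Arguments. Unset Strict Implicit. Unset Printing Implicit Defensive.

Section S.
Variable R : realType.
Variables (M N L : nat) (A : 'M[R]_(M, N)) (b : 'cV[R]_M).

Definition resf (x : 'cV[R]_N) (m : 'I_M) := \sum_(j < N) A m j * x j 0 ^+ L - b m 0.
Definition Gf (x : 'cV[R]_N) (j : 'I_N) := x j 0 ^+ L.-1 * \sum_(m < M) A m j * resf x m.

Lemma norm2_sq (n : nat) (v : 'cV[R]_n) : norm2 v ^+ 2 = \sum_i v i 0 ^+ 2.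
Proof. by rewrite /norm2 sqr_sqrtr // sumr_ge0 // => i _; exact: sqr_ge0. Qed.

Lemma lossE x : loss L A b x = (2 * L%:R)^-1 * \sum_m resf x m ^+ 2.
Proof.
rewrite /loss norm2_sq; congr (_ * _); apply: eq_bigr => m _.
rewrite /resf !mxE; congr (_ ^+ 2); congr (_ - _); apply: eq_bigr => j _; by rewrite !mxE.
Qed.

Lemma loss_chain (y : R -> 'cV[R]_N) (dy : 'I_N -> R) (h0 : R) :
  (0 < L)%N ->
  (forall j, is_derive h0 1 (fun h => y h j 0) (dy j)) ->
  is_derive h0 1 (fun h => loss L A b (y h)) (\sum_j Gf (y h0) j * dy j).
Proof.
move=> L0 Hy.
have -> : (fun h => loss L A b (y h)) =
   (fun h => (2 * L%:R)^-1 * \sum_m resf (y h) m ^+ 2).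
  by apply/funext => h; rewrite lossE.
apply: isd_eq.
  apply: isd_scal; apply: isd_sum => m; apply: isd_exp; rewrite /resf.
  apply: isd_sub.
  apply: isd_sum => j; apply: isd_scal; apply: isd_exp; exact: Hy.
have L0' : (L%:R : R) != 0 by rewrite pnatr_eq0 -lt0n.
have K (a r Y d : R) : (2 * L%:R)^-1 * (2 * r * (a * (L%:R * Y * d))) = a * r * Y * d.
  by field.
rewrite /Gf mulr_sumr.
under eq_bigr => m _ do rewrite subr0 /= expr1 mulr_sumr mulr_sumr.
under eq_bigr => m _ do under eq_bigr => j _ do rewrite K.
rewrite exchange_big; apply: eq_bigr => j _.
rewrite mulr_sumr mulr_suml; apply: eq_bigr => m _; ring.
Qed.

Lemma isd_uniq (V : normedModType R) (f : V -> R) (x v : V) (d1 d2 : R) :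
  is_derive x v f d1 -> is_derive x v f d2 -> d1 = d2.
Proof. by move=> [_ <-] [_ <-]. Qed.

Lemma wn_xE rr (u : 'cV[R]_N) j : wn_x rr u j 0 = rr / norm2 u * u j 0.
Proof. by rewrite /wn_x mxE. Qed.

Lemma grad_r (rr : R) (u : 'cV[R]_N) gr : (0 < L)%N ->
  is_derive rr 1 (fun s => wn_loss L A b s u) gr ->
  gr = \sum_j Gf (wn_x rr u) j * (u j 0 / norm2 u).
Proof.
move=> L0 H; apply: (isd_uniq H); rewrite /wn_loss.
apply: loss_chain => // j.
have -> : (fun s => wn_x s u j 0) = (fun s : R => s / norm2 u * u j 0) by apply/funext => s; rewrite wn_xE.
by apply: isd_eq; rewrite /GRing.scale /=; ring.
Qed.

Lemma norm2_pos (n : nat) (v : 'cV[R]_n) : 0 <= norm2 v.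
Proof. exact: sqrtr_ge0. Qed.

Lemma grad_u (rr : R) (u : 'cV[R]_N) gu (i : 'I_N) : (0 < L)%N -> norm2 u != 0 ->
  is_grad (fun v => wn_loss L A b rr v) u gu ->
  gu i 0 = \sum_j Gf (wn_x rr u) j *
     (rr * ((j == i)%:R / norm2 u - u j 0 * u i 0 / norm2 u ^+ 3)).
Proof.
move=> L0 n0 H; have {H} H := H i.
set n := norm2 u.
have n0' : 0 < n by rewrite lt_def n0 norm2_pos.
set S := fun h : R => \sum_(k < N) (h * (k == i)%:R + u k 0) ^+ 2.
have S0 : S 0 = n ^+ 2.
  by rewrite /S norm2_sq; apply: eq_bigr => k _; rewrite mul0r add0r.
have dS : is_derive (0:R) 1 S (2 * u i 0).
  have D : forall k, is_derive (0:R) 1 (fun h : R => (h * (k == i)%:R + u k 0) ^+ 2)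
      (2%:R * (0 * (k == i)%:R + u k 0) ^+ 1 * (k == i)%:R).
    move=> k; apply: isd_eq; rewrite /GRing.scale /=; ring.
  apply: (isd_eq (isd_sum D)).
  rewrite (bigD1 i) //= big1 ?addr0.
    by rewrite eqxx mul0r add0r expr1 mulr1.
  by move=> k /negbTE ->; rewrite mulr0.
have dn : is_derive (0:R) 1 (fun h => Num.sqrt (S h)) (u i 0 / n).
  have Sp : 0 < S 0 by rewrite S0; exact: exprn_gt0.
  apply: (isd_eq (isd_comp (is_derive1_sqrt Sp) dS)).
  rewrite S0 sqrtr_sqr ger0_norm ?norm2_pos //.
  by field.
have Ey : forall h j, wn_x rr (h *: delta_mx i 0 + u) j 0 =
    rr * (Num.sqrt (S h))^-1 * (h * (j == i)%:R + u j 0).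
  move=> h j; rewrite wn_xE /norm2 !mxE eqxx andbT.
  congr (rr / Num.sqrt _ * _); apply: eq_bigr => k _; rewrite !mxE eqxx andbT //.
apply: (isd_uniq H).
apply: isd_dir; rewrite /wn_loss /=.
have Dj : forall j, is_derive (0:R) 1 (fun h : R => wn_x rr (h *: delta_mx i 0 + u) j 0)
    (rr * ((j == i)%:R / n - u j 0 * u i 0 / n ^+ 3)).
  move=> j.
  have -> : (fun h : R => wn_x rr (h *: delta_mx i 0 + u) j 0) =
     (fun h : R => rr * (Num.sqrt (S h))^-1 * (h * (j == i)%:R + u j 0)).
    by apply/funext => h; rewrite Ey.
  have Sn : Num.sqrt (S 0) = n by rewrite S0 sqrtr_sqr ger0_norm ?norm2_pos.
  have dinv : is_derive (0:R) 1 (fun h => (Num.sqrt (S h))^-1) (- (Num.sqrt (S 0)) ^- 2 * (u i 0 / n)).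
    by apply: isd_inv => //; rewrite Sn.
  have D2 := isd_scal rr dinv.
  have D3 : is_derive (0:R) 1 (fun h : R => h * (j == i)%:R + u j 0) (1 * (j == i)%:R).
    by apply: isd_eq; rewrite /GRing.scale /=; ring.
  apply: (isd_eq (isd_mul D2 D3)).
  rewrite Sn mul0r add0r.
  by field.
have := loss_chain L0 Dj; rewrite scale0r add0r; exact.
Qed.

End S.

End C.
Import C.

Module K.
Import Order.TTheory GRing.Theory Num.Theory.
Import numFieldNormedType.Exports.
Local Open Scope classical_set_scope.
Local Open Scope ring_scope.
Set Implicit Arguments. Unset Strict Implicit. Unset Printing Implicit Defensive.

Section K.
Variable R : realType.
Variable L : nat.
Hypothesis HL : (2 <= L)%N.

Definition phi (y : R) : R :=
  if L == 2%N then ln y else - ((L - 2)%:R)^-1 * (y ^+ (L - 2))^-1.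

Lemma dphi (y : R) : 0 < y -> is_derive y 1 phi (y ^+ L.-1)^-1.
Proof.
move=> y0.
case: (eqVneq L 2%N) => [L2|L2].
  have -> : phi = (@ln R) by apply/funext => x; rewrite /phi L2.
  by rewrite L2 expr1; exact: is_derive1_ln.
have [k Lk] : exists k, L = k.+3.
  by exists (L - 3)%N; move: HL L2; lia.
have -> : phi = (fun x => - ((k.+1)%:R)^-1 * (x ^+ k.+1)^-1).
  by apply/funext => x; rewrite /phi Lk /= subSS subSS subn0.
have yn0 : y != 0 by rewrite gt_eqF.
have ykn0 : y ^+ k.+1 != 0 by rewrite expf_neq0.
have D1 := isd_exp k.+1 (isd_id y).
have D2 := @isd_inv R (fun x => x ^+ k.+1) y _ ykn0 D1.
apply: (isd_eq (isd_scal _ D2)).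
rewrite Lk /=.
have wn0 : y ^+ k != 0 by rewrite expf_neq0.
rewrite !exprS.
move: (y ^+ k) wn0 => w wn0.
have kn0 : ((k.+1)%:R : R) != 0 by rewrite pnatr_eq0.
rewrite expr0 mulr1; field. rewrite wn0 yn0 /=. by rewrite -natr1 addrC in kn0.
Qed.

Lemma phi_le (y : R) : 0 < y -> phi y <= y.
Proof.
move=> y0; rewrite /phi; case: ifP => _.
  exact/ltW/ln_sublinear.
apply: (@le_trans _ _ 0); last exact: ltW.
rewrite mulNr oppr_le0 mulr_ge0 // invr_ge0 ?exprn_ge0 ?ltW //.
Qed.


Lemma phi_small (K : R) : exists2 d : R, 0 < d & forall y, 0 < y -> - K <= phi y -> d < y.
Proof.
case: (eqVneq L 2%N) => [L2|L2].
  exists (expR (- K - 1)); first exact: expR_gt0.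
  move=> y y0; rewrite /phi L2 eqxx => Ky.
  rewrite ltNge; apply/negP => yd.
  have : ln y <= ln (expR (- K - 1)).
    by rewrite ler_ln // posrE expR_gt0.
  rewrite expRK; lra.
have [k Lk] : exists k, L = k.+3.
  by exists (L - 3)%N; move: HL L2; lia.
have Lk2 : (L - 2)%N = k.+1 by rewrite Lk.
set c := ((k.+1)%:R * (`|K| + 1)) : R.
have c1 : 1 <= c.
  have h1 : (1:R) <= (k.+1)%:R by rewrite ler1n.
  have h2 : (0:R) <= `|K| by [].
  rewrite /c; nra.
have c0 : 0 < c by apply: (lt_le_trans _ c1); rewrite ltr01.
exists c^-1; first by rewrite invr_gt0.
move=> y y0; rewrite /phi (negbTE L2) Lk2 => Ky.
rewrite ltNge; apply/negP => yd.
have y1 : y <= 1 by apply: (le_trans yd); rewrite invf_le1.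
have py : y ^+ k.+1 <= y.
  rewrite exprS -[X in _ <= X]mulr1; apply: ler_pM; [exact: ltW | exact: exprn_ge0 (ltW y0) | by [] | exact: exprn_ile1 (ltW y0) y1].
have p0 : 0 < y ^+ k.+1 by exact: exprn_gt0.
have iv : c <= (y ^+ k.+1)^-1.
  rewrite -[c]invrK lef_pV2 ?posrE ?invr_gt0 //; exact: le_trans py yd.
have k0 : (0 : R) < (k.+1)%:R by rewrite ltr0n.
have : (k.+1)%:R^-1 * c <= (k.+1)%:R^-1 * (y ^+ k.+1)^-1.
  by rewrite ler_pM2l // invr_gt0.
rewrite /c mulrA mulVf ?gt_eqF // mul1r.
move: Ky; rewrite mulNr; set q := _ * _.
have : 0 <= `|K| - K by rewrite subr_ge0 ler_norm.
lra.
Qed.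

End K.

End K.
Import K.

Module Co.
Import Order.TTheory GRing.Theory Num.Theory.
Import numFieldNormedType.Exports.
Local Open Scope classical_set_scope.
Local Open Scope ring_scope.
Set Implicit Arguments. Unset Strict Implicit. Unset Printing Implicit Defensive.

Section Core.
Variable R : realType.
Variables (M N L : nat) (A : 'M[R]_(M, N)) (b : 'cV[R]_M) (z : 'cV[R]_N).
Hypothesis HL : (2 <= L)%N.
Hypothesis hz0 : forall j, 0 <= z j 0.
Hypothesis hAz : A *m z = b.

Definition hf (j : 'I_N) (y : R) := 2^-1 * y ^+ 2 - z j 0 * phi L y.
Definition Dsum (x : 'cV[R]_N) := \sum_j hf j (x j 0).
Definition good (x : 'cV[R]_N) := forall j, z j 0 = 0 \/ 0 < x j 0.

Lemma dh (j : 'I_N) (y : R) : z j 0 = 0 \/ 0 < y ->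
  is_derive y 1 (hf j) (y - z j 0 * (y ^+ L.-1)^-1).
Proof.
have D1 : is_derive y 1 (fun y => 2^-1 * y ^+ 2) y.
  apply: (isd_eq (isd_scal _ (isd_exp 2 (isd_id y)))); rewrite /= expr1 mulr1 mulrA mulVf ?mul1r // pnatr_eq0.
case => [z0|y0].
  have -> : hf j = (fun y => 2^-1 * y ^+ 2) by apply/funext => x; rewrite /hf z0 mul0r subr0.
  by rewrite z0 mul0r subr0.
exact: (isd_sub D1 (isd_scal _ (@dphi R L HL y y0))).
Qed.

Lemma h_lb (j : 'I_N) (y : R) : z j 0 = 0 \/ 0 < y -> - (2^-1 * z j 0 ^+ 2) <= hf j y.
Proof.
case => [z0|y0]; rewrite /hf.
  rewrite z0 mul0r subr0 expr0n /= mulr0 oppr0; apply: mulr_ge0 => //; exact: sqr_ge0.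
have := @phi_le R L y y0; have := hz0 j => zj py.
have : z j 0 * phi L y <= z j 0 * y by rewrite ler_wpM2l.
have := sqr_ge0 (y - z j 0); rewrite sqrrB; nra.
Qed.

Lemma Dsum_lb x : good x -> - (\sum_j 2^-1 * z j 0 ^+ 2) <= Dsum x.
Proof.
move=> gx; rewrite /Dsum -sumrN; apply: ler_sum => j _; exact: h_lb.
Qed.

Lemma D_deriv (Y : R -> 'cV[R]_N) (t : R) (dY : 'I_N -> R) :
  (forall j : 'I_N, is_derive t 1 (fun s => Y s j 0) (dY j)) -> good (Y t) ->
  is_derive t 1 (fun s => Dsum (Y s))
     (\sum_j (Y t j 0 - z j 0 * (Y t j 0 ^+ L.-1)^-1) * dY j).
Proof.
move=> HY gY; rewrite /Dsum; apply: isd_sum => j.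
exact: (isd_comp (dh (gY j)) (HY j)).
Qed.

Lemma Az_entry m : \sum_j A m j * z j 0 = b m 0.
Proof. by rewrite -hAz mxE. Qed.

Lemma D_identity x : good x ->
  \sum_j (x j 0 - z j 0 * (x j 0 ^+ L.-1)^-1) * Gf L A b x j =
  \sum_m resf L A b x m ^+ 2.
Proof.
move=> gx.
have E : forall j, (x j 0 - z j 0 * (x j 0 ^+ L.-1)^-1) * Gf L A b x j =
   \sum_m (A m j * x j 0 ^+ L - A m j * z j 0) * resf L A b x m.
  move=> j; rewrite /Gf mulrA.
  have -> : (x j 0 - z j 0 * (x j 0 ^+ L.-1)^-1) * x j 0 ^+ L.-1 = x j 0 ^+ L - z j 0.
    case: (gx j) => [->|xp].
      by rewrite !mul0r !subr0 -exprS prednK // (leq_trans _ HL).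
    have xn : x j 0 ^+ L.-1 != 0 by rewrite expf_neq0 // gt_eqF.
    by rewrite mulrBl -mulrA mulVf // mulr1 -exprS prednK // (leq_trans _ HL).
  rewrite mulr_sumr; apply: eq_bigr => m _; ring.
under eq_bigr do rewrite E.
rewrite exchange_big; apply: eq_bigr => m _.
rewrite -mulr_suml sumrB Az_entry /resf; ring.
Qed.

End Core.

End Co.
Import Co.

Module U.
Import Order.TTheory GRing.Theory Num.Theory.
Import numFieldNormedType.Exports.
Local Open Scope classical_set_scope.
Local Open Scope ring_scope.
Set Implicit Arguments. Unset Strict Implicit. Unset Printing Implicit Defensive.

Section U.
Variable R : realType.

Lemma cont_of_deriv (f : R -> R) (t d : R) : is_derive t 1 f d -> {for t, continuous f}.
Proof. by move=> [df _]; apply/differentiable_continuous/derivable1_diffP. Qed.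

Lemma near_lt (f : R -> R) (T c : R) : {for T, continuous f} -> f T < c ->
  exists2 e : R, 0 < e & forall s, `|T - s| < e -> f s < c.
Proof.
move=> fc fT.
have := @cvgr_lt R R (nbhs T) _ f (f T) fc c fT.
move=> H; have [e /= e0 He] := (nbhs_ballP _ _).1 (H _); exists e => // s Ts; apply: He.
Qed.

Lemma near_gt (f : R -> R) (T c : R) : {for T, continuous f} -> c < f T ->
  exists2 e : R, 0 < e & forall s, `|T - s| < e -> c < f s.
Proof.
move=> fc fT.
have := @cvgr_gt R R (nbhs T) _ f (f T) fc c fT.
move=> H; have [e /= e0 He] := (nbhs_ballP _ _).1 (H _); exists e => // s Ts; apply: He.
Qed.

Lemma deriv_le (f df : R -> R) (a b k : R) : a <= b ->
  (forall x, a <= x <= b -> is_derive x 1 f (df x)) ->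
  (forall x, a <= x <= b -> df x <= k) -> f b - f a <= k * (b - a).
Proof.
move=> ab Hd Hk.
have cf : {within `[a, b], continuous f}.
  apply: derivable_within_continuous => x; rewrite in_itv /= => /Hd.
  by case.
have Hd' : forall x, x \in `]a, b[%R -> is_derive x 1 f (df x).
  by move=> x; rewrite in_itv /= => /andP[ax xb]; apply: Hd; rewrite !ltW.
have [c cab ->] := MVT_segment ab Hd' cf.
by apply: ler_wpM2r; [rewrite subr_ge0 | apply: Hk; move: cab; rewrite in_itv].
Qed.

End U.

End U.
Import U.

Module E.
Import Order.TTheory GRing.Theory Num.Theory.
Import numFieldNormedType.Exports.
Local Open Scope classical_set_scope.
Local Open Scope ring_scope.
Set Implicit Arguments. Unset Strict Implicit. Unset Printing Implicit Defensive.

Section Evol.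
Variable R : realType.
Variables (M N L : nat) (A : 'M[R]_(M, N)) (b : 'cV[R]_M) (z : 'cV[R]_N).
Hypothesis HL : (2 <= L)%N.
Hypothesis hz0 : forall j, 0 <= z j 0.
Hypothesis hAz : A *m z = b.
Hypothesis Hb : b != 0.
Variable Y : R -> 'cV[R]_N.
Definition rho (t : R) := \sum_k Y t k 0 ^+ 2.
Hypothesis HY : forall t : R, 0 < t -> forall j : 'I_N,
  is_derive t 1 (fun s => Y s j 0) (- rho t * Gf L A b (Y t) j).
Variable t0 : R.
Hypothesis t0p : 0 < t0.
Hypothesis HY0 : forall j, 0 < Y t0 j 0.

Let good := good z.
Let Dsum := Dsum L z.
Let hf := hf L z.

Lemma L0 : (0 < L)%N. Proof. exact: leq_trans HL. Qed.

Lemma supp : exists i0, 0 < z i0 0.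
Proof.
apply/not_existsP => H; move/eqP: Hb; apply.
rewrite -hAz (_ : z = 0) ?mulmx0 //; apply/matrixP => i j.
rewrite ord1 mxE; apply/eqP; rewrite eq_le hz0 andbT leNgt; apply/negP => h.
by apply: (H i).
Qed.

Lemma rho_ge0 (t : R) : 0 <= rho t.
Proof. by apply: sumr_ge0 => k _; exact: sqr_ge0. Qed.

Lemma dD (t : R) : 0 < t -> good (Y t) ->
  is_derive t 1 (fun s => Dsum (Y s)) (- rho t * \sum_m resf L A b (Y t) m ^+ 2).
Proof.
move=> tp gt; apply: (isd_eq (D_deriv HL (HY tp) gt)).
rewrite -(D_identity HL hAz gt) mulr_sumr; apply: eq_bigr => j _; ring.
Qed.

Lemma dloss (t : R) : 0 < t ->
  is_derive t 1 (fun s => loss L A b (Y s)) (- rho t * \sum_j Gf L A b (Y t) j ^+ 2).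
Proof.
move=> tp; apply: (isd_eq (loss_chain A b L0 (HY tp))).
rewrite mulr_sumr; apply: eq_bigr => j _; ring.
Qed.

Lemma good_of (x : 'cV[R]_N) : (forall j, 0 < z j 0 -> 0 < x j 0) -> good x.
Proof.
move=> H j; have := hz0 j; rewrite le_eqVlt => /orP[/eqP <-|zj]; [by left|right].
exact: H.
Qed.

Definition K0 := \sum_j 2^-1 * z j 0 ^+ 2.
Definition C := Dsum (Y t0).
Definition C' := C + K0.
Definition Zi := \sum_j (z j 0)^-1.
Definition Kc := C' * Zi.

Lemma good0 : good (Y t0).
Proof. by move=> j; right. Qed.

Lemma C'_ge0 : 0 <= C'.
Proof. have := Dsum_lb L hz0 good0; rewrite /C' /C /K0 /Dsum; lra. Qed.


Section Delta.
Variable d : R.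
Hypothesis d0 : 0 < d.
Hypothesis Hd : forall y, 0 < y -> - Kc <= phi L y -> d < y.

Lemma bound_at (t : R) : good (Y t) -> Dsum (Y t) <= C ->
  forall j, 0 < z j 0 -> d < Y t j 0.
Proof.
move=> gt DC j zj.
have yj : 0 < Y t j 0 by case: (gt j) => // h; move: zj; rewrite h ltxx.
apply: Hd => //.
set y := Y t j 0.
have h1 : hf j y <= C'.
  have e1 : Dsum (Y t) = hf j y + \sum_(k | k != j) hf k (Y t k 0).
    by rewrite /Dsum /Co.Dsum (bigD1 j).
  have e2 : K0 = 2^-1 * z j 0 ^+ 2 + \sum_(k | k != j) 2^-1 * z k 0 ^+ 2.
    by rewrite /K0 (bigD1 j).
  have e3 : - (\sum_(k | k != j) 2^-1 * z k 0 ^+ 2) <= \sum_(k | k != j) hf k (Y t k 0).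
    rewrite -sumrN; apply: ler_sum => k _; exact: h_lb.
  have e4 : 0 <= 2^-1 * z j 0 ^+ 2 by apply: mulr_ge0 => //; exact: sqr_ge0.
  rewrite /C'; lra.
have h2 : - (z j 0 * phi L y) <= C'.
  move: h1; rewrite /hf /Co.hf; have : 0 <= 2^-1 * y ^+ 2 by apply: mulr_ge0 => //; exact: sqr_ge0.
  lra.
have h3 : (z j 0)^-1 <= Zi.
  rewrite /Zi (bigD1 j) //= lerDl; apply: sumr_ge0 => k _; rewrite invr_ge0; exact: hz0.
have h4 : - phi L y <= C' * (z j 0)^-1.
  have : - (z j 0 * phi L y) * (z j 0)^-1 <= C' * (z j 0)^-1.
    by rewrite ler_wpM2r // invr_ge0 ltW.
  by rewrite mulNr mulrAC divff ?gt_eqF // mul1r.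
have h5 : C' * (z j 0)^-1 <= Kc by rewrite /Kc ler_wpM2l // C'_ge0.
lra.
Qed.


Lemma Dmono (T : R) : t0 <= T -> (forall s, t0 <= s <= T -> good (Y s)) ->
  Dsum (Y T) <= C.
Proof.
move=> tT gs.
have := @deriv_le R (fun s => Dsum (Y s)) (fun s => - rho s * \sum_m resf L A b (Y s) m ^+ 2)
  t0 T 0 tT.
rewrite mul0r /C => H; suff : Dsum (Y T) - Dsum (Y t0) <= 0 by lra.
apply: H.
  move=> x /andP[xa xb]; apply: dD; [exact: lt_le_trans xa | by apply: gs; rewrite xa xb].
move=> x _; rewrite mulNr oppr_le0; apply: mulr_ge0; first exact: rho_ge0.
by apply: sumr_ge0 => m _; exact: sqr_ge0.
Qed.

Lemma claim (t1 : R) : t0 <= t1 -> forall j, 0 < z j 0 -> d < Y t1 j 0.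
Proof.
move=> t01 j1 zj1; rewrite ltNge; apply/negP => bad1.
set B := [set s | t0 <= s /\ exists j, 0 < z j 0 /\ Y s j 0 <= d].
have B1 : B t1 by split => //; exists j1.
have lbB : lbound B t0 by move=> s [].
have hlb : has_lbound B by exists t0.
set T := inf B.
have T0 : t0 <= T := lb_le_inf (ex_intro _ t1 B1) lbB.
have TB : forall s, B s -> T <= s by move=> s Bs; exact: ge_inf hlb s Bs.
have Tp : 0 < T by exact: lt_le_trans T0.
have before : forall s, t0 <= s -> s < T -> forall j, 0 < z j 0 -> d < Y s j 0.
  move=> s ts sT j zj; rewrite ltNge; apply/negP => h.
  have := TB s (conj ts (ex_intro _ j (conj zj h))); rewrite leNgt sT.
  by [].
have at0 : forall j, 0 < z j 0 -> d < Y t0 j 0 by apply: bound_at; [exact: good0 | ].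
have atT : forall j, 0 < z j 0 -> d <= Y T j 0.
  move=> j zj; rewrite leNgt; apply/negP => hT.
  case: (eqVneq T t0) => [Tt0|Tn].
    by have := at0 j zj; rewrite -Tt0; lra.
  have Tgt : t0 < T by rewrite lt_neqAle eq_sym Tn T0.
  have [e e0 He] := near_lt (cont_of_deriv (HY Tp j)) hT.
  set m := Num.min e (T - t0).
  have m0 : 0 < m by rewrite lt_min e0 subr_gt0 Tgt.
  have me : m <= e by rewrite ge_min lexx.
  have mT : m <= T - t0 by rewrite ge_min lexx orbT.
  have h1 := He (T - m / 2) _.
  have h2 := before (T - m / 2) _ _ j zj.
  have : `|T - (T - m / 2)| < e.
    rewrite opprB addrC subrK ger0_norm; lra.
  move/h1 => h3.
  have : d < Y (T - m / 2) j 0 by apply: h2; lra.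
  lra.
have gT : forall s, t0 <= s <= T -> good (Y s).
  move=> s /andP[ts sT]; apply: good_of => j zj.
  move: sT; rewrite le_eqVlt => /orP[/eqP ->|sT].
    exact: lt_le_trans d0 (atT j zj).
  exact: lt_trans d0 (before s ts sT j zj).
have DT := Dmono T0 gT.
have gTT : good (Y T) by apply: gT; rewrite T0 lexx.
have atT' := bound_at gTT DT.
have near1 : \forall s \near T, forall j, 0 < z j 0 -> d < Y s j 0.
  have FF : Filter (nbhs T) by exact: nbhs_filter.
  have := @filter_forall R 'I_N (fun j s => 0 < z j 0 -> d < Y s j 0) (nbhs T) FF.
  apply => j.
  have [zj|zj] := ltP 0 (z j 0).
    have := @cvgr_gt R R (nbhs T) _ (fun s => Y s j 0) (Y T j 0) (cont_of_deriv (HY Tp j)) d (atT' j zj).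
    move=> H; exact: (@filterS _ _ FF _ _ (fun s hs _ => hs) (H FF)).
  by apply: (@nearW _ _ _ FF) => s.
have [e /= e0 He] := (nbhs_ballP _ _).1 near1.
have : T + e <= T.
  apply: lb_le_inf; first by exists t1.
  move=> s Bs; rewrite leNgt; apply/negP => se.
  have Ts := TB s Bs.
  case: Bs => ts [j [zj hj]].
  have : d < Y s j 0.
    apply: (He s _ j zj); rewrite /ball /= ltr_distlC; apply/andP; split; lra.
  lra.
lra.
Qed.


Lemma goodT (t : R) : t0 <= t -> good (Y t).
Proof. by move=> htt; apply: good_of => j zj; exact: lt_trans d0 (claim htt zj). Qed.

Lemma rho_lb (t : R) : t0 <= t -> d ^+ 2 <= rho t.
Proof.
move=> htt; have [i0 zi0] := supp.
have h := claim htt zi0.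
rewrite /rho (bigD1 i0) //=.
have : 0 <= \sum_(k | k != i0) Y t k 0 ^+ 2 by apply: sumr_ge0 => k _; exact: sqr_ge0.
have hY := lt_trans d0 h.
have : d ^+ 2 <= Y t i0 0 ^+ 2 by rewrite !expr2; apply: ler_pM; rewrite ?ltW.
lra.
Qed.

Lemma loss_ge0 (x : 'cV[R]_N) : 0 <= loss L A b x.
Proof.
rewrite lossE; apply: mulr_ge0; first by rewrite invr_ge0 mulr_ge0 // ler0n.
by apply: sumr_ge0 => m _; exact: sqr_ge0.
Qed.

Lemma loss_mono (s t : R) : t0 <= s -> s <= t -> loss L A b (Y t) <= loss L A b (Y s).
Proof.
move=> ts st.
have := @deriv_le R (fun s => loss L A b (Y s)) (fun s => - rho s * \sum_j Gf L A b (Y s) j ^+ 2)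
  s t 0 st.
rewrite mul0r => H; suff : loss L A b (Y t) - loss L A b (Y s) <= 0 by lra.
apply: H.
  move=> x /andP[xa xb]; apply: dloss; apply: lt_le_trans xa; exact: lt_le_trans ts.
move=> x _; rewrite mulNr oppr_le0; apply: mulr_ge0; first exact: rho_ge0.
by apply: sumr_ge0 => m _; exact: sqr_ge0.
Qed.

Lemma sum_res (x : 'cV[R]_N) : \sum_m resf L A b x m ^+ 2 = (2 * L%:R) * loss L A b x.
Proof.
have Ln : (L%:R : R) != 0 by rewrite pnatr_eq0 -lt0n L0.
by rewrite lossE mulrA mulfV ?mul1r // mulf_neq0.
Qed.

Lemma final_cvg : loss L A b (Y t) @[t --> +oo] --> 0.
Proof.
apply/cvgrPdist_lt => e e0.
have [[T1 [tT1 lT1]]|nT] := pselect (exists T1, t0 <= T1 /\ loss L A b (Y T1) < e).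
  exists T1; split; first exact: num_real.
  move=> t Tt; rewrite sub0r normrN ger0_norm ?loss_ge0 //.
  apply: le_lt_trans lT1; apply: loss_mono => //; exact: ltW.
exfalso.
have lb : forall t, t0 <= t -> e <= loss L A b (Y t).
  by move=> t htt; rewrite leNgt; apply/negP => h; apply: nT; exists t.
set k := d ^+ 2 * ((2 * L%:R) * e).
have k0 : 0 < k.
  by rewrite /k mulr_gt0 ?exprn_gt0 // mulr_gt0 // mulr_gt0 // ltr0n L0.
have Dd : forall t, t0 <= t -> Dsum (Y t) - C <= - k * (t - t0).
  move=> t htt.
  apply: (@deriv_le R (fun s => Dsum (Y s)) (fun s => - rho s * \sum_m resf L A b (Y s) m ^+ 2)) => //.
    move=> x /andP[xa xb]; apply: dD; [exact: lt_le_trans xa | exact: goodT].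
  move=> x /andP[xa xb]; rewrite sum_res.
  have h1 := rho_lb xa; have h2 := lb x xa.
  have h3 : 0 <= d ^+ 2 by exact: sqr_ge0.
  have h4 : (0:R) <= 2 * L%:R by rewrite mulr_ge0 // ler0n.
  rewrite mulNr lerN2; apply: ler_pM => //; first by rewrite mulr_ge0 // ltW.
  by rewrite ler_wpM2l.
set t := t0 + (C + K0 + 1) / k.
have htt : t0 <= t.
  rewrite /t lerDl; apply: divr_ge0; last exact: ltW.
  have := C'_ge0; rewrite /C'; lra.
have := Dd t htt.
have : t - t0 = (C + K0 + 1) / k by rewrite /t addrC addKr.
move=> ->; rewrite mulNr mulrC divfK ?gt_eqF //.
have := Dsum_lb L hz0 (goodT htt); rewrite /K0 /Dsum.
lra.
Qed.

End Delta.
End Evol.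

End E.
Import E.

Module Mn.
Import Order.TTheory GRing.Theory Num.Theory.
Import numFieldNormedType.Exports.
Local Open Scope classical_set_scope.
Local Open Scope ring_scope.
Set Implicit Arguments. Unset Strict Implicit. Unset Printing Implicit Defensive.

Section Mn.
Variable R : realType.
Variables (M N L : nat) (A : 'M[R]_(M, N)) (b : 'cV[R]_M).

Lemma sq_sum0 (u : 'cV[R]_N) : \sum_i u i 0 ^+ 2 = 0 -> forall i, u i 0 = 0.
Proof.
move=> H i; move: H; rewrite (bigD1 i) //=.
have : 0 <= \sum_(k | k != i) u k 0 ^+ 2 by apply: sumr_ge0 => k _; exact: sqr_ge0.
have := sqr_ge0 (u i 0) => h1 h2 h3.
have : u i 0 ^+ 2 = 0 by lra.
by move/eqP; rewrite expf_eq0 /= => /eqP.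
Qed.

Lemma orth (rr : R) (u gu : 'cV[R]_N) : (0 < L)%N ->
  is_grad (fun v => wn_loss L A b rr v) u gu -> \sum_i u i 0 * gu i 0 = 0.
Proof.
move=> L0 H.
case: (eqVneq (norm2 u) 0) => [n0|n0].
  have h : \sum_i u i 0 ^+ 2 = 0 by rewrite -norm2_sq n0 expr0n.
  by apply: big1 => i _; rewrite (sq_sum0 h) mul0r.
set n := norm2 u.
under eq_bigr do rewrite (grad_u _ L0 n0 H).
have S1 : forall j, \sum_i u i 0 * (rr * ((j == i)%:R / n - u j 0 * u i 0 / n ^+ 3)) = 0.
  move=> j.
  have e1 : \sum_i u i 0 * (rr * ((j == i)%:R / n - u j 0 * u i 0 / n ^+ 3)) =
    rr * (\sum_i u i 0 * (j == i)%:R) / n - rr * u j 0 * (\sum_i u i 0 ^+ 2) / n ^+ 3.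
    rewrite !mulr_sumr !mulr_suml -sumrB; apply: eq_bigr => i _; ring.
  have e2 : \sum_i u i 0 * (j == i)%:R = u j 0.
    rewrite (bigD1 j) //= eqxx mulr1 big1 ?addr0 // => i /negbTE; rewrite eq_sym => ->.
    by rewrite mulr0.
  by rewrite e1 e2 -norm2_sq -/n; field.
under eq_bigr do rewrite mulr_sumr.
rewrite exchange_big; apply: big1 => j _.
transitivity (Gf L A b (wn_x rr u) j * 0); last by rewrite mulr0.
rewrite -[in RHS](S1 j) mulr_sumr.
by apply: eq_bigr => i _; ring.
Qed.

Lemma cvg_sumf n (T : Type) (F : set_system T) (FF : Filter F) (f : 'I_n -> T -> R) (l : 'I_n -> R) :
  (forall i, f i x @[x --> F] --> l i) -> (\sum_i f i x) @[x --> F] --> \sum_i l i.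
Proof.
elim: n f l => [|n IH] f l H.
  rewrite big_ord0; under eq_cvg do rewrite big_ord0; exact: cvg_cst.
rewrite big_ord_recr /=; under eq_cvg do rewrite big_ord_recr /=.
apply: cvgD; last exact: H.
exact: (IH (fun i => f (widen_ord (leqnSn n) i)) (fun i => l (widen_ord (leqnSn n) i))).
Qed.

Lemma const_pos (f : R -> R) : (forall t : R, 0 < t -> is_derive t 1 f 0) ->
  forall a c : R, 0 < a -> 0 < c -> f a = f c.
Proof.
move=> H.
suff : forall a c : R, 0 < a -> a <= c -> f c - f a <= 0 /\ 0 <= f c - f a.
  move=> S a c a0 c0; case: (leP a c) => ac.
    by have := S a c a0 ac; lra.
  by have := S c a c0 (ltW ac); lra.
move=> a c a0 ac; split.
  have := @deriv_le R f (fun=> 0) a c 0 ac; rewrite mul0r; apply => // x /andP[xa _].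
  apply: H; exact: lt_le_trans xa.
have := @deriv_le R (fun s => - f s) (fun=> 0) a c 0 ac; rewrite mul0r => D.
suff : - f c - - f a <= 0 by lra.
apply: D => // x /andP[xa _].
have := isd_scal (-1) (H x (lt_le_trans a0 xa)).
rewrite mulr0 => D'; apply: (is_derive_eq (f := fun s => - f s) _ (erefl 0)).
by have -> : (fun s => - f s) = (fun s => -1 * f s) by apply/funext => s; rewrite mulN1r.
Qed.

End Mn.

End Mn.
Import Mn.

Unset Implicit Arguments.
Set Strict Implicit.

Theorem mainTheorem18 (R : realType) (M N L : nat)
  (A : 'M[R]_(M, N)) (b : 'cV[R]_M)
  (r : R -> R) (u : R -> 'cV[R]_N) :
  (2 <= L)%N ->
  b != 0 ->
  (exists z : 'cV[R]_N, (forall i, 0 <= z i 0) /\ A *m z = b) ->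
  (* weight-normalized gradient flow with eta_r = r^2, eta_u = 1, for t > 0 *)
  (forall t : R, 0 < t ->
     exists (gr : R) (gu : 'cV[R]_N),
       is_derive (r t) 1 (fun s => wn_loss L A b s (u t)) gr /\
       is_grad (fun v => wn_loss L A b (r t) v) (u t) gu /\
       is_derive t 1 r (- (r t ^+ 2 * gr)) /\
       is_derive t 1 u (- gu)) ->
  (* initial conditions (solution continuous at t = 0 from the right) *)
  r x @[x --> 0^'+] --> r 0 ->
  u x @[x --> 0^'+] --> u 0 ->
  0 < r 0 ->
  (forall i, 0 < u 0 i 0) ->
  norm2 (u 0) = 1 ->
  loss L A b (wn_x (r t) (u t)) @[t --> +oo] --> 0.
Proof.
move=> HL Hb [z [hz hAz]] Hflow Hrc Huc r0p u0p u0n.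
have L0 : (0 < L)%N by exact: leq_trans HL.
have ucv : forall i, u x i 0 @[x --> 0^'+] --> u 0 i 0.
  move=> i; exact: (continuous_cvg _ (@coord_continuous R N 1 i 0 (u 0)) Huc).
set f := fun s => \sum_i u s i 0 ^+ 2.
have df : forall t : R, 0 < t -> is_derive t 1 f 0.
  move=> t tp; have [gr [gu [Hr [Hu [Hdr Hdu]]]]] := Hflow t tp.
  apply: (isd_eq (isd_sum (fun i => isd_exp 2 (is_derive_coord i Hdu)))).
  transitivity (-2 * \sum_i u t i 0 * gu i 0); last by rewrite (orth L0 Hu) mulr0.
  rewrite mulr_sumr; apply: eq_bigr => i _; rewrite mxE /=; ring.
have fc := const_pos df.
have f0 : f x @[x --> 0^'+] --> (1:R).
  have -> : (1 : R) = \sum_i u 0 i 0 ^+ 2 by rewrite -norm2_sq u0n expr1n.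
  apply: cvg_sumf => i.
  under eq_cvg do rewrite expr2; rewrite expr2; apply: cvgM; exact: ucv.
have f1 : f (1:R) = 1.
  have H1 : f x @[x --> 0^'+] --> f (1:R).
    have H : \forall x \near 0^'+, f (1:R) = f x.
      near=> x; apply: fc => //; near: x; exact: nbhs_right_gt.
    exact: cvg_trans (near_eq_cvg H) (cvg_cst _).
  by rewrite -(cvg_lim _ H1) // (cvg_lim _ f0).
have nu : forall t : R, 0 < t -> norm2 (u t) = 1.
  by move=> t tp; rewrite /norm2 -/(f t) (fc t 1) // f1 sqrtr1.
set Y := fun t : R => r t *: u t.
have wY : forall t : R, 0 < t -> wn_x (r t) (u t) = Y t.
  by move=> t tp; rewrite /wn_x nu // divr1.
have rhoE : forall t : R, 0 < t -> rho Y t = r t ^+ 2.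
  move=> t tp; rewrite /rho.
  transitivity (r t ^+ 2 * f t); last by rewrite (fc t 1) // f1 mulr1.
  by rewrite /f mulr_sumr; apply: eq_bigr => k _; rewrite /Y mxE exprMn.
have HY : forall t : R, 0 < t -> forall j : 'I_N,
    is_derive t 1 (fun s => Y s j 0) (- rho Y t * Gf L A b (Y t) j).
  move=> t tp j; have [gr [gu [Hr [Hu [Hdr Hdu]]]]] := Hflow t tp.
  have -> : (fun s => Y s j 0) = (fun s => r s * u s j 0).
    by apply/funext => s; rewrite /Y mxE.
  apply: (isd_eq (isd_mul Hdr (is_derive_coord j Hdu))).
  have n0 : norm2 (u t) != 0 by rewrite nu // oner_eq0.
  rewrite (grad_r L0 Hr) mxE (grad_u j L0 n0 Hu) nu // wY // rhoE //.
  set G := Gf L A b (Y t).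
  set P := \sum_k G k * u t k 0.
  have e1 : \sum_k G k * (u t k 0 / 1) = P by apply: eq_bigr => k _; rewrite divr1.
  have e2 : \sum_k G k * (r t * ((k == j)%:R / 1 - u t k 0 * u t j 0 / 1 ^+ 3)) =
      r t * G j - r t * u t j 0 * P.
    have e3 : \sum_k G k * (k == j)%:R = G j.
      rewrite (bigD1 j) //= eqxx mulr1 big1 ?addr0 // => k /negbTE ->; exact: mulr0.
    transitivity (\sum_k (r t * (G k * (k == j)%:R) - r t * u t j 0 * (G k * u t k 0))).
      by apply: eq_bigr => k _; rewrite expr1n !divr1; ring.
    by rewrite sumrB -!mulr_sumr e3.
  rewrite e1 e2; ring.
have [t0 [t0p HY0]] : exists t0 : R, 0 < t0 /\ forall j, 0 < Y t0 j 0.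
  have e1 := @nbhs_right_gt R 0.
  have e2 : \forall s \near 0^'+, 0 < r s.
    exact: (@cvgr_gt R R (0^'+) _ r (r 0) Hrc 0 r0p).
  have e3 : \forall s \near 0^'+, forall j, 0 < u s j 0.
    apply: (@filter_forall R 'I_N (fun j s => 0 < u s j 0)) => j.
    exact: (@cvgr_gt R R (0^'+) _ (fun s => u s j 0) (u 0 j 0) (ucv j) 0 (u0p j)).
  have PF : ProperFilter (0^'+ : set_system R) by exact: at_right_proper_filter.
  have FF : Filter (0^'+ : set_system R) by exact: PF.
  have FF' : Filter (nbhs (0^'+ : set_system R)) by exact: FF.
  have e4 : \forall s \near 0^'+, (0 < s /\ (0 < r s /\ forall j, 0 < u s j 0)).
    exact: (filterI e1 (filterI e2 e3)).
  have [s [s0 [rs us]]] := @filter_ex R _ PF _ e4.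
  by exists s; split => // j; rewrite /Y mxE; exact: mulr_gt0.
have [d d0 Hd] := phi_small HL (Kc L z Y t0).
have Hfin := final_cvg HL hz hAz Hb HY t0p HY0 d0 Hd.
have H : \forall t \near +oo, loss L A b (Y t) = loss L A b (wn_x (r t) (u t)).
  exists 0; split; first exact: num_real.
  by move=> t tp; rewrite wY.
exact: cvg_trans (near_eq_cvg H) Hfin.
Unshelve. all: by end_near.
Qed.
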